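(* Let $n\ge 2$ and $\alpha\in\mathbb{Z}_2^n$. Then $$\max_{\beta,\gamma\in\mathbb{Z}_2^n}\mathrm{adp}^{\mathrm{XR}}_1(\alpha,\beta\to\gamma)=\mathrm{adp}^{\mathrm{XR}}_1(\alpha,\alpha\to 0).$$
   Context: For $x\in\mathbb{Z}_2^n$ write $x=(x_0,\dots,x_{n-1})$ and identify $x$ with the integer $\sum_{i=0}^{n-1}x_i2^{n-1-i}$, so $x_0$ is the most significant bit; $x+y$, $x-y$ and $-x$ are computed modulo $2^n$. $\oplus$ is bitwise XOR and $x\lll r=(x_r,\dots,x_{n-1},x_0,\dots,x_{r-1})$. For $f:(\mathbb{Z}_2^n)^k\to\mathbb{Z}_2^n$ the additive differential probability is $\mathrm{adp}^f(\alpha_1,\dots,\alpha_k\to\alpha_{k+1})=2^{-kn}\#\{(x_1,\dots,x_k)\in(\mathbb{Z}_2^n)^k: f(x_1+\alpha_1,\dots,x_k+\alpha_k)=f(x_1,\dots,x_k)+\alpha_{k+1}\}$. For $1\le r\le n-1$, $\mathrm{adp}^{\mathrm{XR}}_r$ denotes $\mathrm{adp}^f$ for $f(x,y)=(x\oplus y)\lll r$. *)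

(* Defs.v *)
From mathcomp Require Import all_boot all_order all_algebra.
Set Implicit Arguments. Unset Strict Implicit. Unset Printing Implicit Defensive.
Import Order.TTheory GRing.Theory Num.Theory.

(* n-bit words: elements of Z_2^n identified with integers 0 <= x < 2^n,
   x = sum_i x_i 2^(n-1-i), so x_0 is the most significant bit. *)
Definition word (n : nat) := 'I_(2 ^ n).

Definition bit (n : nat) (x : nat) (i : nat) : bool := odd (x %/ 2 ^ (n.-1 - i)).

Definition of_bits (n : nat) (b : nat -> bool) : nat :=
  \sum_(i < n) (b i : nat) * 2 ^ (n.-1 - i).

(* of_bits n b < 2^n always; the reduction mod 2^n only serves to build the ordinal *)
Definition mkword (n : nat) (b : nat -> bool) : word n :=
  Ordinal (ltn_pmod (of_bits n b) (expn_gt0 2 n)).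

Definition wadd n (x y : word n) : word n :=
  Ordinal (ltn_pmod (x + y) (expn_gt0 2 n)).
Definition wxor n (x y : word n) : word n :=
  mkword n (fun i => bit n x i (+) bit n y i).

Definition wrotl n (x : word n) (r : nat) : word n :=
  mkword n (fun i => bit n x ((i + r) %% n)).

Definition XR n (r : nat) (x y : word n) : word n := wrotl (wxor x y) r.

Definition adpXR n (r : nat) (a b c : word n) : rat :=
  (#|[set xy : word n * word n |
       XR r (wadd xy.1 a) (wadd xy.2 b) == wadd (XR r xy.1 xy.2) c]|%:R)
  / (2 ^ (2 * n))%:R.

Definition wzero n : word n := Ordinal (expn_gt0 2 n).

(* Main.v *)
Require Import Defs.
From mathcomp Require Import all_boot all_order all_algebra.
From mathcomp Require Import zify.
From Stdlib Require PeanoNat.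
Import Order.TTheory GRing.Theory Num.Theory.
Set Implicit Arguments. Unset Strict Implicit. Unset Printing Implicit Defensive.

Definition tb (x k : nat) : bool := odd (x %/ 2 ^ k).

Lemma nat_odd_div2 x : Nat.odd x = odd x /\ Nat.div2 x = x./2.
Proof.
elim: x {-2}x (leqnn x) => [|N IH] [|[|x]] //= Hx.
have [H1 H2] := IH x (ltnW Hx).
split; last by rewrite H2.
by rewrite -H1 PeanoNat.Nat.odd_succ_succ negbK.
Qed.

Lemma tbS x k : tb x k.+1 = tb x./2 k.
Proof. by rewrite /tb expnS divnMA divn2. Qed.

Lemma testbit_tb x k : Nat.testbit x k = tb x k.
Proof.
elim: k x => [|k IH] x /=; first by rewrite (proj1 (nat_odd_div2 x)) /tb expn0 divn1.
by rewrite IH (proj2 (nat_odd_div2 x)) tbS.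
Qed.

Lemma bits_eq x y : (forall k, tb x k = tb y k) -> x = y.
Proof. move=> H; apply: PeanoNat.Nat.bits_inj; intro k; by rewrite !testbit_tb. Qed.

Lemma lxor_tb x y k : tb (Nat.lxor x y) k = tb x k (+) tb y k.
Proof. by rewrite -!testbit_tb PeanoNat.Nat.lxor_spec; case: (Nat.testbit x k); case: (Nat.testbit y k). Qed.

Lemma half_cons (e : bool) X : (e + 2 * X)./2 = X.
Proof. by case: e; rewrite /= ?add0n ?add1n mul2n ?doubleK // uphalf_double. Qed.

Lemma tb_cons0 (e : bool) X : tb (e + 2 * X) 0 = e.
Proof. by rewrite /tb expn0 divn1 oddD oddM /= addbF oddb. Qed.

Lemma tb_consS (e : bool) X k : tb (e + 2 * X) k.+1 = tb X k.
Proof. by rewrite tbS half_cons. Qed.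

Lemma tb_small x k : x < 2 ^ k -> tb x k = false.
Proof. by move=> H; rewrite /tb divn_small. Qed.

Lemma cons_decomp x : x = odd x + 2 * x./2.
Proof. by rewrite mul2n -{1}(odd_double_half x). Qed.

Lemma tb_top m (e : bool) X k : X < 2 ^ m ->
  tb (e * 2 ^ m + X) k = if k < m then tb X k else (k == m) && e.
Proof.
elim: m e X k => [|m IH] e X k HX.
  move: HX; rewrite expn0 ltnS leqn0 => /eqP ->.
  rewrite addn0 muln1; case: k => [|k]; first by rewrite /tb expn0 divn1 oddb.
  by rewrite tb_small // (leq_ltn_trans (leq_b1 e)) // (ltn_exp2l 0) .
rewrite {1}(cons_decomp X) expnS mulnCA addnCA -mulnDr.
case: k => [|k]; first by rewrite tb_cons0 /tb expn0 divn1.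
rewrite tb_consS IH; last by rewrite -(ltn_pmul2l (isT : 0 < 2)) -expnS (leq_ltn_trans _ HX) // {2}(cons_decomp X) leq_addl.
by rewrite ltnS eqSS tbS.
Qed.

Lemma lxor_cons (e f : bool) A B :
  Nat.lxor (e + 2 * A) (f + 2 * B) = (e (+) f) + 2 * Nat.lxor A B.
Proof.
apply: bits_eq => [[|k]]; by rewrite lxor_tb ?tb_cons0 ?tb_consS // lxor_tb.
Qed.

Lemma half_lt m p : p < 2 ^ m.+1 -> p./2 < 2 ^ m.
Proof. move=> H; move: H; rewrite {1}(cons_decomp p) expnS; lia. Qed.

Lemma lxor_lt m p q : p < 2 ^ m -> q < 2 ^ m -> Nat.lxor p q < 2 ^ m.
Proof.
elim: m p q => [|m IH] p q.
  by rewrite expn0 !ltnS !leqn0 => /eqP -> /eqP ->.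
move=> Hp Hq; rewrite (cons_decomp p) (cons_decomp q) lxor_cons.
have := IH _ _ (half_lt Hp) (half_lt Hq); rewrite expnS.
case: (odd p (+) odd q) => /=; lia.
Qed.

Lemma lxor_top m (e f : bool) p q : p < 2 ^ m -> q < 2 ^ m ->
  Nat.lxor (e * 2 ^ m + p) (f * 2 ^ m + q) = (e (+) f) * 2 ^ m + Nat.lxor p q.
Proof.
move=> Hp Hq; apply: bits_eq => k.
rewrite lxor_tb !tb_top ?lxor_lt //; case: (k < m); first by rewrite lxor_tb.
by case: (k == m).
Qed.

Lemma ofbS n b : of_bits n.+1 b = b n + 2 * of_bits n b.
Proof.
rewrite /of_bits big_ord_recr /= subnn expn0 muln1 addnC; congr (_ + _).
rewrite big_distrr /=; apply: eq_bigr => i _.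
by rewrite mulnCA -expnS; congr (_ * 2 ^ _); have := ltn_ord i; lia.
Qed.

Lemma ofb_tb n b k : tb (of_bits n b) k = (k < n) && b (n.-1 - k).
Proof.
elim: n k => [|n IH] k.
  by rewrite /of_bits big_ord0 /tb div0n.
rewrite ofbS; case: k => [|k]; first by rewrite tb_cons0 subn0.
rewrite tb_consS IH ltnS; case: (k < n) / ltnP => //= H.
by congr (b _); lia.
Qed.

Lemma ofb_lt n b : of_bits n b < 2 ^ n.
Proof.
elim: n => [|n IH]; first by rewrite /of_bits big_ord0.
rewrite ofbS expnS; move: IH; case: (b n) => /=; lia.
Qed.

Lemma val_wxor n (x y : word n) : val (wxor x y) = Nat.lxor x y.
Proof.
rewrite /wxor /mkword /= modn_small ?ofb_lt //.
apply: bits_eq => k; rewrite ofb_tb lxor_tb /bit.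
case: (ltnP k n) => H /=.
  by have -> : n.-1 - (n.-1 - k) = k by lia.
have Hk : 2 ^ n <= 2 ^ k by rewrite leq_exp2l.
by rewrite !tb_small // (leq_trans _ Hk) // ltn_ord.
Qed.

Lemma top_decomp m v : v < 2 ^ m.+1 ->
  v = (2 ^ m <= v) * 2 ^ m + v %% 2 ^ m /\ v %/ 2 ^ m = (2 ^ m <= v).
Proof.
move=> Hv.
have Hd : v %/ 2 ^ m = (2 ^ m <= v).
  case: leqP => H; last by rewrite divn_small.
  apply/eqP; rewrite eqn_leq -ltnS ltn_divLR ?expn_gt0 //.
  have -> : true.+1 * 2 ^ m = 2 ^ m.+1 by rewrite expnS.
  by rewrite Hv /= divn_gt0 ?expn_gt0.
by split => //; rewrite -Hd -divn_eq.
Qed.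

Definition rot m v := v %/ 2 ^ m + 2 * (v %% 2 ^ m).

Lemma val_wrotl m (v : word m.+1) : val (wrotl v 1) = rot m v.
Proof.
rewrite /wrotl /mkword /= modn_small ?ofb_lt // /rot.
have [Hv Hd] := top_decomp (ltn_ord v).
rewrite Hd; apply: bits_eq => k; rewrite ofb_tb /bit /=.
case: k => [|k].
  rewrite tb_cons0 subn0 addn1 modnn subn0.
  by rewrite Hd oddb.
rewrite (tb_consS (2 ^ m <= v)).
rewrite ltnS; case: (ltnP k m) => H /=.
  rewrite modn_small; last by lia.
  have -> : m - (m - k.+1 + 1) = k by lia.
  by rewrite -/(tb v k) {1}Hv tb_top ?ltn_pmod ?expn_gt0 // H.
rewrite tb_small // (leq_trans (ltn_pmod _ (expn_gt0 2 m))) //.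
by rewrite leq_exp2l.
Qed.

Definition maj (a b c : bool) := [|| a && b, a && c | b && c].

Definition condG m a b g (c1 c2 c3 p : bool) x y : bool :=
  (Nat.lxor ((x + a + c1) %% 2 ^ m) ((y + b + c2) %% 2 ^ m)
     == (Nat.lxor x y + g + c3) %% 2 ^ m)
  && (((2 ^ m <= x + a + c1) (+) (2 ^ m <= y + b + c2)) == p).

Definition G m a b g c1 c2 c3 p :=
  \sum_(0 <= x < 2 ^ m) \sum_(0 <= y < 2 ^ m) condG m a b g c1 c2 c3 p x y.

Lemma sum_double k (F : nat -> nat) :
  \sum_(0 <= x < 2 * k) F x = \sum_(0 <= x < k) F (false + 2 * x) + \sum_(0 <= x < k) F (true + 2 * x).
Proof.
elim: k => [|k IH]; first by rewrite muln0 !big_geq.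
rewrite mulnS !add2n !big_nat_recr //= IH /= add0n add1n; lia.
Qed.

Lemma sum_split m (F : nat -> nat) :
  \sum_(0 <= x < 2 ^ m.+1) F x = \sum_(0 <= x < 2 ^ m) F (false + 2 * x) + \sum_(0 <= x < 2 ^ m) F (true + 2 * x).
Proof. by rewrite expnS sum_double. Qed.

Lemma add3 (e f c : bool) X Y :
  (e + 2 * X) + (f + 2 * Y) + c = (e (+) f (+) c) + 2 * (X + Y + maj e f c).
Proof. by case: e; case: f; case: c => /=; lia. Qed.

Lemma mod_cons m (e : bool) A : (e + 2 * A) %% 2 ^ m.+1 = e + 2 * (A %% 2 ^ m).
Proof.
have Hr := ltn_pmod A (expn_gt0 2 m).
rewrite {1}(divn_eq A (2 ^ m)).
have -> : e + 2 * (A %/ 2 ^ m * 2 ^ m + A %% 2 ^ m) = A %/ 2 ^ m * 2 ^ m.+1 + (e + 2 * (A %% 2 ^ m)).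
  rewrite expnS; nia.
rewrite modnMDl modn_small // expnS; move: Hr; case: e => /=; lia.
Qed.

Lemma carry_cons m (e : bool) A : (2 ^ m.+1 <= e + 2 * A) = (2 ^ m <= A).
Proof. rewrite expnS; case: e => /=; lia. Qed.

Lemma eq_cons (e f : bool) A B : (e + 2 * A == f + 2 * B) = (e == f) && (A == B).
Proof. by case: e; case: f => /=; lia. Qed.

Lemma condG_rec m (a0 b0 g0 : bool) a b g c1 c2 c3 p (x0 y0 : bool) x y :
  condG m.+1 (a0 + 2 * a) (b0 + 2 * b) (g0 + 2 * g) c1 c2 c3 p (x0 + 2 * x) (y0 + 2 * y)
  = (c1 (+) c2 (+) c3 == a0 (+) b0 (+) g0)
    && condG m a b g (maj x0 a0 c1) (maj y0 b0 c2) (maj (x0 (+) y0) g0 c3) p x y.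
Proof.
rewrite /condG !add3 lxor_cons add3 !mod_cons lxor_cons eq_cons !carry_cons andbA.
congr (_ && _ && _).
by case: x0; case: y0; case: a0; case: b0; case: g0; case: c1; case: c2; case: c3.
Qed.

Lemma G_rec m (a0 b0 g0 : bool) a b g c1 c2 c3 p :
  G m.+1 (a0 + 2 * a) (b0 + 2 * b) (g0 + 2 * g) c1 c2 c3 p
  = (c1 (+) c2 (+) c3 == a0 (+) b0 (+) g0) *
    (G m a b g (maj false a0 c1) (maj false b0 c2) (maj (false (+) false) g0 c3) p
   + G m a b g (maj false a0 c1) (maj true b0 c2) (maj (false (+) true) g0 c3) p
   + G m a b g (maj true a0 c1) (maj false b0 c2) (maj (true (+) false) g0 c3) p
   + G m a b g (maj true a0 c1) (maj true b0 c2) (maj (true (+) true) g0 c3) p).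
Proof.
rewrite /G; set A := a0 + 2 * a; set B := b0 + 2 * b; set C := g0 + 2 * g.
rewrite sum_split.
under eq_bigr => x _ do rewrite sum_split.
under [X in _ + X]eq_bigr => x _ do rewrite sum_split.
rewrite !big_split !mulnDr !addnA.
congr (_ + _ + _ + _); rewrite big_distrr; apply: eq_bigr => x _;
  rewrite big_distrr; apply: eq_bigr => y _; rewrite /A /B /C condG_rec; case: (_ == _) => /=; by rewrite ?mul1n ?mul0n.
Qed.

Lemma G0 a b g c1 c2 c3 p :
  G 0 a b g c1 c2 c3 p = ((1 <= a + c1) (+) (1 <= b + c2) == p).
Proof.
by rewrite /G !big_nat1 /condG expn0 !modn1 !add0n.
Qed.

Lemma G_par m a b g c1 c2 c3 p :
  (c1 (+) c2 (+) c3 != odd a (+) odd b (+) odd g) -> G m.+1 a b g c1 c2 c3 p = 0.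
Proof.
move=> H.
rewrite (cons_decomp a) (cons_decomp b) (cons_decomp g) G_rec.
by rewrite (negbTE H).
Qed.

Lemma G_zero m a (d e : bool) : a < 2 ^ m -> d != e -> G m a a 0 d e false false = 0.
Proof.
case: m => [|m] Ha Hde.
  move: Ha; rewrite expn0 ltnS leqn0 => /eqP ->.
  by rewrite G0; move: Hde; case: d; case: e.
apply: G_par; rewrite addbb /=.
by move: Hde; case: d; case: e.
Qed.

Lemma bound_par m a' b' g' d e f p :
  (forall a b g c1 c2 c3 p, a < 2 ^ m.+1 ->
     G m.+1 a b g c1 c2 c3 p <= G m.+1 a a 0 c1 c1 false false) -> a' < 2 ^ m.+1 ->
  G m.+1 a' b' g' d e f p <=
  (d (+) e (+) f == odd a' (+) odd b' (+) odd g') * G m.+1 a' a' 0 d d false false.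
Proof.
move=> IH Ha; case: eqP => H; first by rewrite mul1n IH.
by rewrite G_par //; apply/eqP.
Qed.

Lemma mulb_le (q : bool) n : q * n <= n.
Proof. by case: q; rewrite ?mul1n ?mul0n. Qed.

Lemma Hmain m : forall a b g c1 c2 c3 p, a < 2 ^ m ->
  G m a b g c1 c2 c3 p <= G m a a 0 c1 c1 false false.
Proof.
elim: m => [|m IH] a b g c1 c2 c3 p Ha.
  by rewrite !G0 addbb /= leq_b1.
have Ea := cons_decomp a; have Eb := cons_decomp b; have Eg := cons_decomp g.
have R1 := G_rec m (odd a) (odd b) (odd g) a./2 b./2 g./2 c1 c2 c3 p.
rewrite -Ea -Eb -Eg in R1.
have R2 := G_rec m (odd a) (odd a) false a./2 a./2 0 c1 c1 false false.
rewrite -Ea in R2; change (false + 2 * 0) with 0 in R2.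
rewrite R1 R2.
have Ha' : a./2 < 2 ^ m by apply: half_lt.
clear R1 R2 Ea Eb Eg Ha.
move: (odd b) (odd g) (a./2) (b./2) (g./2) Ha' => b0 g0 a' b' g' Ha'.
case: (odd a); case: c1; rewrite /maj /=;
  try (apply: leq_trans (mulb_le _ _) _; rewrite mul1n;
       by repeat apply: leq_add; apply: IH).
all: rewrite (G_zero (d:=false) (e:=true) Ha') // (G_zero (d:=true) (e:=false) Ha') // !addn0.
all: case: m IH Ha' => [|m] IH Ha'.
1,3: move: Ha'; rewrite expn0 ltnS leqn0 => /eqP ->; rewrite !G0 /=;
     case: b' => [|b']; rewrite ?add0n ?addSn ?ltn0Sn;
     case: b0; case: c2; case: g0; case: c3; case: p => /=; lia.
all: apply: leq_trans (leq_mul (leqnn _) (leq_add (leq_add (leq_add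
        (bound_par _ _ _ _ _ _ IH Ha') (bound_par _ _ _ _ _ _ IH Ha'))
        (bound_par _ _ _ _ _ _ IH Ha')) (bound_par _ _ _ _ _ _ IH Ha'))) _.
all: move: (G m.+1 a' a' 0 false false false false) (G m.+1 a' a' 0 true true false false)
       (odd a' (+) odd b' (+) odd g') => X Y t.
all: case: b0; case: c2; case: g0; case: c3; case: t => /=; lia.
Qed.

Lemma sum_top m (F : nat -> nat) :
  \sum_(0 <= x < 2 ^ m.+1) F x =
  \sum_(0 <= x < 2 ^ m) F (false * 2 ^ m + x) + \sum_(0 <= x < 2 ^ m) F (true * 2 ^ m + x).
Proof.
rewrite expnS mul2n -addnn (big_cat_nat _ (n := 2 ^ m)) ?leq_addr //=.
congr (_ + _).
rewrite -{1}(add0n (2 ^ m)) big_addn addnK.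
by apply: eq_bigr => x _; rewrite mul1n addnC.
Qed.

Lemma topmod m t r : r < 2 ^ m -> (t * 2 ^ m + r) %% 2 ^ m.+1 = odd t * 2 ^ m + r.
Proof.
move=> Hr.
have -> : t * 2 ^ m + r = t./2 * 2 ^ m.+1 + (odd t * 2 ^ m + r).
  rewrite {1}(cons_decomp t) expnS; nia.
rewrite modnMDl modn_small //.
rewrite expnS; case: (odd t) => /=; lia.
Qed.

Lemma addtop m (xh ah : bool) xl al : xl < 2 ^ m -> al < 2 ^ m ->
  (xh * 2 ^ m + xl + (ah * 2 ^ m + al)) %% 2 ^ m.+1 =
  (xh (+) ah (+) (2 ^ m <= xl + al + false)) * 2 ^ m + (xl + al + false) %% 2 ^ m.
Proof.
move=> Hx Ha.
have HS : xl + al + false < 2 ^ m.+1 by rewrite expnS addn0; lia.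
have [HS1 _] := top_decomp HS.
have -> : xh * 2 ^ m + xl + (ah * 2 ^ m + al) =
          (xh + ah + (2 ^ m <= xl + al + false)) * 2 ^ m + (xl + al + false) %% 2 ^ m.
  move: HS1; rewrite addn0; move: (2 ^ m <= xl + al) => c HS1; nia.
by rewrite topmod ?ltn_pmod ?expn_gt0 // !oddD !oddb.
Qed.

Lemma rot_top m (e : bool) L : L < 2 ^ m -> rot m (e * 2 ^ m + L) = e + 2 * L.
Proof.
move=> HL; rewrite /rot divnMDl ?expn_gt0 // divn_small // addn0.
by rewrite modnMDl modn_small.
Qed.

Lemma add2 (e f : bool) X Y :
  (e + 2 * X) + (f + 2 * Y) = (e (+) f) + 2 * (X + Y + (e && f)).
Proof. by case: e; case: f => /=; lia. Qed.

Definition condXR m a b g x y :=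
  rot m (Nat.lxor ((x + a) %% 2 ^ m.+1) ((y + b) %% 2 ^ m.+1))
   == (rot m (Nat.lxor x y) + g) %% 2 ^ m.+1.

Lemma condXR_top m (ah bh : bool) al bl (g0 : bool) g (xh yh : bool) xl yl :
  al < 2 ^ m -> bl < 2 ^ m -> xl < 2 ^ m -> yl < 2 ^ m ->
  condXR m (ah * 2 ^ m + al) (bh * 2 ^ m + bl) (g0 + 2 * g) (xh * 2 ^ m + xl) (yh * 2 ^ m + yl)
  = condG m al bl g false false ((xh (+) yh) && g0) (ah (+) bh (+) g0) xl yl.
Proof.
move=> Ha Hb Hx Hy.
have Hm := expn_gt0 2 m.
rewrite /condXR !addtop // lxor_top ?ltn_pmod // rot_top ?lxor_lt ?ltn_pmod //.
rewrite lxor_top // rot_top ?lxor_lt // add2 mod_cons eq_cons /condG andbC.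
congr (_ && _).
move: (2 ^ m <= _) (2 ^ m <= _) => cx cy.
by case: xh; case: yh; case: ah; case: bh; case: g0; case: cx; case: cy.
Qed.

Lemma val_wadd n (u v : word n) : val (wadd u v) = (u + v) %% 2 ^ n.
Proof. by []. Qed.

Lemma card_eq m (a b g : word m.+1) :
  #|[set xy : word m.+1 * word m.+1 |
       XR 1 (wadd xy.1 a) (wadd xy.2 b) == wadd (XR 1 xy.1 xy.2) g]|
  = \sum_(0 <= x < 2 ^ m.+1) \sum_(0 <= y < 2 ^ m.+1) condXR m a b g x y.
Proof.
rewrite -sum1_card big_mkcond /=.
rewrite [RHS]big_mkord; under [RHS]eq_bigr => x _ do rewrite big_mkord.
rewrite [RHS]pair_bigA; apply: eq_bigr => [[x y]] _.
rewrite inE -val_eqE !val_wadd /XR !val_wrotl !val_wxor !val_wadd.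
by rewrite /condXR; case: (_ == _).
Qed.

Lemma count_top m (ah bh g0 : bool) al bl g : al < 2 ^ m -> bl < 2 ^ m ->
  \sum_(0 <= x < 2 ^ m.+1) \sum_(0 <= y < 2 ^ m.+1)
     condXR m (ah * 2 ^ m + al) (bh * 2 ^ m + bl) (g0 + 2 * g) x y
  = G m al bl g false false ((false (+) false) && g0) (ah (+) bh (+) g0)
  + G m al bl g false false ((false (+) true) && g0) (ah (+) bh (+) g0)
  + G m al bl g false false ((true (+) false) && g0) (ah (+) bh (+) g0)
  + G m al bl g false false ((true (+) true) && g0) (ah (+) bh (+) g0).
Proof.
move=> Ha Hb.
set A := ah * 2 ^ m + al; set B := bh * 2 ^ m + bl; set C := g0 + 2 * g.
rewrite sum_top.
under eq_bigr => x _ do rewrite sum_top.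
under [X in _ + X]eq_bigr => x _ do rewrite sum_top.
rewrite !big_split !addnA /G.
congr (_ + _ + _ + _); apply: eq_big_nat => x /andP[_ Hx];
  apply: eq_big_nat => y /andP[_ Hy]; by rewrite /A /B /C condXR_top.
Qed.

Lemma count_word m (a b g : word m.+1) :
  let ah := 2 ^ m <= a in let bh := 2 ^ m <= b in
  let al := a %% 2 ^ m in let bl := b %% 2 ^ m in
  #|[set xy : word m.+1 * word m.+1 |
       XR 1 (wadd xy.1 a) (wadd xy.2 b) == wadd (XR 1 xy.1 xy.2) g]|
  = G m al bl g./2 false false ((false (+) false) && odd g) (ah (+) bh (+) odd g)
  + G m al bl g./2 false false ((false (+) true) && odd g) (ah (+) bh (+) odd g)
  + G m al bl g./2 false false ((true (+) false) && odd g) (ah (+) bh (+) odd g)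
  + G m al bl g./2 false false ((true (+) true) && odd g) (ah (+) bh (+) odd g).
Proof.
move=> ah bh al bl.
rewrite card_eq.
have [Ea _] := top_decomp (ltn_ord a).
have [Eb _] := top_decomp (ltn_ord b).
have Eg := cons_decomp g.
rewrite [in condXR m a]Ea [in condXR m _ b]Eb [in condXR m _ _ g]Eg.
by rewrite count_top // ltn_pmod // expn_gt0.
Qed.

Unset Implicit Arguments.
Local Open Scope ring_scope.

Theorem theorem6 (n : nat) (Hn : (2 <= n)%N) (alpha : word n) :
  \big[Num.max/0]_(bc : word n * word n) adpXR 1 alpha bc.1 bc.2
  = adpXR 1 alpha alpha (wzero n).
Proof.
case: n Hn alpha => [|m] // Hn alpha.
have Hal : (alpha %% 2 ^ m < 2 ^ m)%N by rewrite ltn_pmod // expn_gt0.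
have key : forall b c : word m.+1,
  (#|[set xy : word m.+1 * word m.+1 |
       XR 1 (wadd xy.1 alpha) (wadd xy.2 b) == wadd (XR 1 xy.1 xy.2) c]|
   <= #|[set xy : word m.+1 * word m.+1 |
       XR 1 (wadd xy.1 alpha) (wadd xy.2 alpha) == wadd (XR 1 xy.1 xy.2) (wzero m.+1)]|)%N.
  move=> b c; rewrite !count_word /= addbb /=.
  by repeat apply: leq_add; apply: Hmain.
set F := fun bc : word m.+1 * word m.+1 => adpXR 1 alpha bc.1 bc.2.
have Fle : forall bc, F bc <= F (alpha, wzero m.+1).
  move=> [b c]; rewrite /F /adpXR /=; apply: ler_wpM2r.
    by rewrite invr_ge0 ler0n.
  by rewrite ler_nat key.
have F0 : 0 <= F (alpha, wzero m.+1) by rewrite /F /adpXR divr_ge0 ?ler0n.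
apply/eqP; rewrite eq_le; apply/andP; split.
  apply: (big_ind (fun x => x <= F (alpha, wzero m.+1))) => //.
    by move=> x y Hx Hy; rewrite ge_max Hx Hy.
  by move=> bc _; apply: Fle.
by rewrite (bigD1 (alpha, wzero m.+1)) //= le_max lexx.
Qed.
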